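(* Let $g:[1/2,1]\to\mathbb{R}$ be non-decreasing on $[1/2,1]$ with $g(1)\neq g(1/2)$. Then for any $a,b>0$, \[ a\sharp b+\frac{2}{g(1)-g\left(\frac12\right)}\left[\int_{1/2}^{1}g(t)H_t(a,b)\,dt-L(a,b)\int_{1/2}^{1}g(t)\,dt\right]\le a\nabla b . \]
   Context: For $a,b>0$: $a\sharp b=\sqrt{ab}$, $a\nabla b=\frac{a+b}{2}$, $a\sharp_t b=a^{1-t}b^{t}$. The Heinz mean is $H_t(a,b)=\frac{a\sharp_t b+b\sharp_t a}{2}$ for $0\le t\le1$, and the logarithmic mean is $L(a,b)=\frac{b-a}{\ln b-\ln a}$ for $a\neq b$, with the usual convention $L(a,a)=a$. *)

(* Defs.v *)
From Stdlib Require Import Reals.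
From Coquelicot Require Import Coquelicot.
Open Scope R_scope.

Definition geo_mean (a b : R) : R := sqrt (a * b).
Definition ari_mean (a b : R) : R := (a + b) / 2.
Definition wgeo_mean (t a b : R) : R := Rpower a (1 - t) * Rpower b t.
Definition heinz_mean (t a b : R) : R := (wgeo_mean t a b + wgeo_mean t b a) / 2.
Definition log_mean (a b : R) : R :=
  if Req_EM_T a b then a else (b - a) / (ln b - ln a).

(* Main.v *)
Require Import Defs.
From Stdlib Require Import Reals Lra.
From Coquelicot Require Import Coquelicot.
From Stdlib Require Import Lia Classical ClassicalEpsilon.
Open Scope R_scope.

Lemma ind_int (f k : R -> R) (a b c0 : R) :
  a <= b -> (forall x y, a <= x -> x <= y -> y <= b -> f x <= f y) ->
  ex_RInt k a b ->
  ex_RInt (fun t => (if Rle_dec c0 (f t) then 1 else 0) * k t) a b.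
Proof.
  intros hab hf hk.
  set (E := fun x => x = a \/ (a <= x <= b /\ ~ c0 <= f x)).
  assert (hE : bound E). { exists b. intros x hx. destruct hx as [hx|[hx _]]; [rewrite hx|]; lra. }
  assert (hE2 : exists x, E x) by (exists a; left; reflexivity).
  destruct (completeness E hE hE2) as [c [hub hlub]].
  assert (hac : a <= c) by (apply hub; left; reflexivity).
  assert (hcb : c <= b). { apply hlub. intros x hx. destruct hx as [hx|[hx _]]; [rewrite hx|]; lra. }
  apply ex_RInt_Chasles_0 with c; [lra| |].
  - apply ex_RInt_ext with (fun _ => 0).
    + rewrite Rmin_left, Rmax_right by lra. intros x hx.
      destruct (Rle_dec c0 (f x)) as [h|h]; [|symmetry; apply Rmult_0_l].
      exfalso.
      assert (hy : exists y, E y /\ x < y).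
      { apply NNPP. intro hn. assert (c <= x). 
        { apply hlub. intros y hy. destruct (Rle_dec y x) as [r|r]; auto.
          exfalso; apply hn; exists y; split; auto; lra. }
        lra. }
      destruct hy as [y [[->|[hy hny]] hxy]]; [lra|]. apply hny.
      apply Rle_trans with (f x); auto. apply hf; lra.
    + apply ex_RInt_const.
  - apply ex_RInt_ext with k.
    + rewrite Rmin_left, Rmax_right by lra. intros x hx.
      destruct (Rle_dec c0 (f x)) as [h|h]; [symmetry; apply Rmult_1_l|].
      exfalso. assert (hEx : E x) by (right; split; [lra|auto]).
      specialize (hub x hEx). lra.
    + apply (@ex_RInt_Chasles_2 R_CompleteNormedModule k a c b); [lra|auto].
Qed.

Fixpoint cnt (f : R -> R) (a e t : R) (n : nat) : nat :=
  match n with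
  | O => O
  | S m => (cnt f a e t m + if Rle_dec (f a + INR (S m) * e) (f t) then 1 else 0)%nat
  end.

Lemma cnt_prop f a e t n : 0 < e -> f a <= f t ->
  (cnt f a e t n <= n)%nat /\ INR (cnt f a e t n) * e <= f t - f a /\
  (cnt f a e t n = n \/ f t - f a < (INR (cnt f a e t n) + 1) * e).
Proof.
  intros he hft. induction n as [|m [IH1 [IH2 IH3]]].
  - simpl. split; [lia|]. split; [lra|]. left; reflexivity.
  - change (cnt f a e t (S m)) with (cnt f a e t m + (if Rle_dec (f a + INR (S m) * e) (f t) then 1 else 0))%nat.
    rewrite S_INR.
    destruct (Rle_dec (f a + (INR m + 1) * e) (f t)) as [h|h]; cbv iota beta.
    + rewrite plus_INR. simpl (INR 1).
      assert (INR (cnt f a e t m) <= INR m) by (apply le_INR; auto).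
      split; [lia|]. split; [nra|].
      destruct IH3 as [->|IH3]; [left; lia|]. exfalso. nra.
    + rewrite Nat.add_0_r. split; [lia|]. split; [auto|].
      destruct IH3 as [->|IH3]; right; [lra|auto].
Qed.

Lemma cnt_int (f k : R -> R) a b e n : a <= b -> (forall x y, a <= x -> x <= y -> y <= b -> f x <= f y) ->
  ex_RInt k a b -> ex_RInt (fun t => INR (cnt f a e t n) * k t) a b.
Proof.
  intros hab hf hk. induction n as [|m IH].
  - apply ex_RInt_ext with (fun _ => 0). intros; simpl; ring. apply ex_RInt_const.
  - apply ex_RInt_ext with (fun t => Rplus (INR (cnt f a e t m) * k t)
       ((if Rle_dec (f a + INR (S m) * e) (f t) then 1 else 0) * k t)).
    + intros x _.
      assert (HH : INR (cnt f a e x m) * k x + (if Rle_dec (f a + INR (S m) * e) (f x) then 1 else 0) * k x = INR (cnt f a e x (S m)) * k x).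
      { change (cnt f a e x (S m)) with (cnt f a e x m + (if Rle_dec (f a + INR (S m) * e) (f x) then 1 else 0))%nat.
        rewrite plus_INR.
        destruct (Rle_dec (f a + INR (S m) * e) (f x)); cbv iota beta; simpl; ring. }
      exact HH.
    + eapply (@ex_RInt_plus R_NormedModule (fun t => INR (cnt f a e t m) * k t) (fun t => (if Rle_dec (f a + INR (S m) * e) (f t) then 1 else 0) * k t)).
      exact IH. apply (ind_int f k a b); [exact hab|exact hf|exact hk].
Qed.

Lemma ex_RInt_approx (f : R -> R) a b :
  a <= b ->
  (forall eps : posreal, exists h, ex_RInt h a b /\ forall t, a <= t <= b -> Rabs (f t - h t) <= eps) ->
  ex_RInt f a b.
Proof.
  intros hab H. apply ex_RInt_Reals_1. intro eps.
  assert (hd : 0 < eps / (2 * (b - a + 1))).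
  { apply Rdiv_lt_0_compat. apply cond_pos. lra. }
  destruct (constructive_indefinite_description _ (H (mkposreal _ hd))) as [h [hh hfh]].
  pose proof (ex_RInt_Reals_0 _ _ _ hh) as hR.
  assert (he2 : 0 < eps / 2) by (apply Rdiv_lt_0_compat; [apply cond_pos|lra]).
  destruct (hR (mkposreal _ he2)) as [phi [psi [h1 h2]]].
  exists phi.
  exists (mkStepFun (StepFun_P28 1 psi (mkStepFun (StepFun_P4 a b (eps / (2 * (b - a + 1))))))).
  split.
  - intros t ht. simpl. unfold fct_cte.
    rewrite Rmin_left, Rmax_right in ht by lra.
    specialize (hfh t ht). simpl in hfh.
    assert (h1' := h1 t). rewrite Rmin_left, Rmax_right in h1' by lra. specialize (h1' ht).
    replace (f t - phi t) with ((f t - h t) + (h t - phi t)) by ring.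
    eapply Rle_trans. apply Rabs_triang. lra.
  - rewrite StepFun_P30. rewrite StepFun_P18. simpl in h2.
    assert (hq : eps / (2 * (b - a + 1)) * (b - a) <= eps / 2).
    { unfold Rdiv. assert (0 < / (2 * (b - a + 1))) by (apply Rinv_0_lt_compat; lra).
      assert (/ (2 * (b - a + 1)) * (2 * (b - a + 1)) = 1) by (field; lra).
      pose proof (cond_pos eps). nra. }
    assert (0 <= eps / (2 * (b - a + 1)) * (b - a)) by (apply Rmult_le_pos; lra).
    eapply Rle_lt_trans. apply Rabs_triang. rewrite Rmult_1_l.
    rewrite (Rabs_right (_ * (b - a))) by lra. lra.
Qed.

Lemma mono_int (f k : R -> R) a b : a <= b ->
  (forall x y, a <= x -> x <= y -> y <= b -> f x <= f y) ->
  ex_RInt k a b -> ex_RInt (fun t => f t * k t) a b.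
Proof.
  intros hab hf hk.
  destruct (ex_RInt_ub k a b hk) as [M hM].
  rewrite Rmin_left, Rmax_right in hM by lra.
  apply ex_RInt_approx; auto. intro eps.
  set (M' := Rabs M + 1).
  assert (hM' : 0 < M') by (unfold M'; pose proof (Rabs_pos M); lra).
  set (e := eps / M').
  assert (he : 0 < e) by (apply Rdiv_lt_0_compat; [apply cond_pos|lra]).
  destruct (INR_unbounded ((f b - f a) / e)) as [N hN].
  exists (fun t => f a * k t + e * (INR (cnt f a e t N) * k t)).
  split.
  - eapply (@ex_RInt_plus R_NormedModule (fun t => f a * k t) (fun t => e * (INR (cnt f a e t N) * k t))).
    + exact (@ex_RInt_scal R_NormedModule k a b (f a) hk).
    + exact (@ex_RInt_scal R_NormedModule _ a b e (cnt_int f k a b e N hab hf hk)).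
  - intros t ht.
    assert (hfa : f a <= f t) by (apply hf; lra).
    assert (hfb : f t <= f b) by (apply hf; lra).
    destruct (cnt_prop f a e t N he hfa) as [c1 [c2 c3]].
    assert (hkt : Rabs (k t) <= M') by (specialize (hM t ht); unfold norm in hM; simpl in hM;
       unfold abs in hM; simpl in hM; unfold M'; pose proof (Rle_abs M); lra).
    assert (hd : 0 <= f t - f a - INR (cnt f a e t N) * e <= e).
    { split; [lra|]. destruct c3 as [c3|c3]; [|lra].
      rewrite c3. assert (f b - f a < INR N * e).
      { apply Rmult_lt_reg_r with (/ e). apply Rinv_0_lt_compat; auto.
        rewrite Rmult_assoc, Rinv_r by lra. rewrite Rmult_1_r. exact hN. }
      lra. }
    replace (f t * k t - (f a * k t + e * (INR (cnt f a e t N) * k t)))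
      with ((f t - f a - INR (cnt f a e t N) * e) * k t) by ring.
    rewrite Rabs_mult. rewrite Rabs_right by lra.
    apply Rle_trans with (e * M'). apply Rmult_le_compat; try lra. apply Rabs_pos.
    unfold e. right. field. lra.
Qed.

Lemma wamgm a b t : 0 < a -> 0 < b -> 0 <= t <= 1 ->
  exp ((1 - t) * ln a + t * ln b) <= (1 - t) * a + t * b.
Proof.
  intros ha hb ht.
  set (m := (1 - t) * a + t * b).
  assert (hm : 0 < m).
  { unfold m. destruct (Rle_lt_or_eq _ _ (proj1 ht)) as [h|h].
    - assert (0 <= (1 - t) * a) by (apply Rmult_le_pos; lra). nra.
    - subst t. lra. }
  assert (e1 : 1 + (ln a - ln m) <= a / m).
  { rewrite <- ln_div by auto. rewrite <- (exp_ln (a / m)) at 2.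
    apply exp_ineq1_le. apply Rdiv_lt_0_compat; auto. }
  assert (e2 : 1 + (ln b - ln m) <= b / m).
  { rewrite <- ln_div by auto. rewrite <- (exp_ln (b / m)) at 2.
    apply exp_ineq1_le. apply Rdiv_lt_0_compat; auto. }
  assert (e3 : (1 - t) * (a / m) + t * (b / m) = 1) by (unfold m in *; field; lra).
  assert (e5 := Rmult_le_compat_l (1 - t) _ _ ltac:(lra) e1).
  assert (e6 := Rmult_le_compat_l t _ _ ltac:(lra) e2).
  assert (e4 : (1 - t) * ln a + t * ln b <= ln m) by lra.
  apply Rle_trans with (exp (ln m)); [|rewrite exp_ln by auto; unfold m; lra].
  destruct (Rle_lt_or_eq _ _ e4) as [h|h].
  - left. apply exp_increasing. exact h.
  - rewrite h. right. reflexivity.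
Qed.


Lemma wgeo_exp t a b : wgeo_mean t a b = exp ((1 - t) * ln a + t * ln b).
Proof. unfold wgeo_mean, Rpower. rewrite exp_plus. reflexivity. Qed.

Lemma heinz_exp t a b : heinz_mean t a b =
  (exp ((1 - t) * ln a + t * ln b) + exp ((1 - t) * ln b + t * ln a)) / 2.
Proof. unfold heinz_mean. rewrite !wgeo_exp. reflexivity. Qed.

Ltac toR := match goal with |- ?x = ?y => change (@eq R x y) end.

Lemma heinz_int a b : 0 < a -> 0 < b ->
  is_RInt (fun t => heinz_mean t a b) (1/2) 1 (log_mean a b / 2).
Proof.
  intros ha hb. unfold log_mean. destruct (Req_EM_T a b) as [<-|hne].
  - apply is_RInt_ext with (fun _ => a).
    + intros x _. rewrite heinz_exp.
      replace ((1 - x) * ln a + x * ln a) with (ln a) by ring.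
      rewrite exp_ln by auto. toR; field.
    + replace (a / 2) with (scal (1 - 1/2) a). apply (@is_RInt_const R_NormedModule).
      unfold scal; simpl; unfold mult; simpl. field.
  - assert (hc : ln b - ln a <> 0).
    { intro h. apply hne. apply ln_inv; auto. lra. }
    apply is_RInt_ext with (fun t => (exp ((1 - t) * ln a + t * ln b) + exp ((1 - t) * ln b + t * ln a)) / 2).
    + intros; rewrite heinz_exp; reflexivity.
    + set (F := fun t => (exp ((1 - t) * ln a + t * ln b) - exp ((1 - t) * ln b + t * ln a)) / (2 * (ln b - ln a))).
      replace ((b - a) / (ln b - ln a) / 2) with (minus (F 1) (F (1/2))).
      * apply (@is_RInt_derive R_CompleteNormedModule).
        -- intros x _. unfold F. auto_derive; [auto|]. replace (1 + - x) with (1 - x) by ring. toR; field. auto.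
        -- intros x _. apply (ex_derive_continuous (fun t => (exp ((1 - t) * ln a + t * ln b) + exp ((1 - t) * ln b + t * ln a)) / 2)).
           auto_derive. auto.
      * unfold minus, plus, opp, F; simpl.
        replace ((1 - 1) * ln a + 1 * ln b) with (ln b) by ring.
        replace ((1 - 1) * ln b + 1 * ln a) with (ln a) by ring.
        replace ((1 - 1/2) * ln b + 1/2 * ln a) with ((1 - 1/2) * ln a + 1/2 * ln b) by field.
        rewrite !exp_ln by auto. field. auto.
Qed.

Lemma heinz_bounds a b t : 0 < a -> 0 < b -> 0 <= t <= 1 ->
  geo_mean a b <= heinz_mean t a b <= ari_mean a b.
Proof.
  intros ha hb ht. rewrite heinz_exp. unfold geo_mean, ari_mean.
  pose proof (wamgm a b t ha hb ht) as w1. pose proof (wamgm b a t hb ha ht) as w2.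
  assert (hxy : exp ((1 - t) * ln a + t * ln b) * exp ((1 - t) * ln b + t * ln a) = a * b).
  { rewrite <- exp_plus.
    replace ((1 - t) * ln a + t * ln b + ((1 - t) * ln b + t * ln a)) with (ln a + ln b) by ring.
    rewrite exp_plus, !exp_ln; auto. }
  set (x := exp ((1 - t) * ln a + t * ln b)) in *.
  set (y := exp ((1 - t) * ln b + t * ln a)) in *.
  assert (hx : 0 < x) by apply exp_pos. assert (hy : 0 < y) by apply exp_pos.
  split.
  - rewrite <- hxy. rewrite sqrt_mult by lra.
    pose proof (sqrt_sqrt x ltac:(lra)). pose proof (sqrt_sqrt y ltac:(lra)).
    pose proof (pow2_ge_0 (sqrt x - sqrt y)). nra.
  - lra.
Qed.

Theorem theorem2p3 (g : R -> R)
  (g_mono : forall x y, 1/2 <= x -> x <= y -> y <= 1 -> g x <= g y)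
  (g_ne : g 1 <> g (1/2))
  (a b : R) (ha : 0 < a) (hb : 0 < b) :
  geo_mean a b
    + 2 / (g 1 - g (1/2))
      * (RInt (fun t => g t * heinz_mean t a b) (1/2) 1
         - log_mean a b * RInt g (1/2) 1)
  <= ari_mean a b.
Proof.
  set (G := geo_mean a b). set (A := ari_mean a b). set (L := log_mean a b).
  assert (hHb : forall t, 1/2 <= t <= 1 -> G <= heinz_mean t a b <= A).
  { intros t ht. apply heinz_bounds; auto; lra. }
  assert (hIH := heinz_int a b ha hb). fold L in hIH.
  assert (hcG : is_RInt (fun _ => G) (1/2) 1 ((1 - 1/2) * G)) by exact (@is_RInt_const R_NormedModule _ _ G).
  assert (hcA : is_RInt (fun _ => A) (1/2) 1 ((1 - 1/2) * A)) by exact (@is_RInt_const R_NormedModule _ _ A).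
  assert (hLG : (1 - 1/2) * G <= L / 2).
  { apply (is_RInt_le _ _ (1/2) 1 _ _ ltac:(lra) hcG hIH). intros x hx. apply hHb; lra. }
  assert (hLA : L / 2 <= (1 - 1/2) * A).
  { apply (is_RInt_le _ _ (1/2) 1 _ _ ltac:(lra) hIH hcA). intros x hx. apply hHb; lra. }
  assert (hg01 : g (1/2) <= g 1) by (apply g_mono; lra).
  set (D := g 1 - g (1/2)).
  assert (hD : 0 < D) by (unfold D; destruct (Rle_lt_or_eq _ _ hg01) as [h|h]; [lra| congruence]).
  assert (hgb : forall t, 1/2 <= t <= 1 -> g (1/2) <= g t <= g 1).
  { intros t ht; split; apply g_mono; lra. }
  assert (exg : ex_RInt g (1/2) 1).
  { apply ex_RInt_ext with (fun t => g t * 1). intros; apply Rmult_1_r.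
    apply (mono_int g (fun _ => 1)). lra. intros; apply g_mono; lra. apply ex_RInt_const. }
  assert (exgH : ex_RInt (fun t => g t * heinz_mean t a b) (1/2) 1).
  { apply (mono_int g (fun t => heinz_mean t a b)). lra. intros; apply g_mono; lra.
    exists (L / 2). exact hIH. }
  set (I1 := RInt (fun t => g t * heinz_mean t a b) (1/2) 1).
  set (I2 := RInt g (1/2) 1).
  assert (hI1 : is_RInt (fun t => g t * heinz_mean t a b) (1/2) 1 I1) by exact (@RInt_correct R_CompleteNormedModule _ _ _ exgH).
  assert (hI2 : is_RInt g (1/2) 1 I2) by exact (@RInt_correct R_CompleteNormedModule _ _ _ exg).
  assert (hL : is_RInt (fun t => g t * heinz_mean t a b - L * g t) (1/2) 1 (I1 - L * I2)).
  { exact (@is_RInt_minus R_NormedModule _ _ _ _ _ _ hI1 (@is_RInt_scal R_NormedModule _ _ _ L _ hI2)). }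
  assert (hR : is_RInt (fun t => g (1/2) * (heinz_mean t a b - L) + D * (A - L)) (1/2) 1
                 (g (1/2) * (L / 2 - (1 - 1/2) * L) + (1 - 1/2) * (D * (A - L)))).
  { apply (@is_RInt_plus R_NormedModule).
    - apply (@is_RInt_scal R_NormedModule).
      apply (@is_RInt_minus R_NormedModule). exact hIH. exact (@is_RInt_const R_NormedModule _ _ L).
    - exact (@is_RInt_const R_NormedModule _ _ (D * (A - L))). }
  assert (hle : I1 - L * I2 <= g (1/2) * (L / 2 - (1 - 1/2) * L) + (1 - 1/2) * (D * (A - L))).
  { apply (is_RInt_le _ _ (1/2) 1 _ _ ltac:(lra) hL hR). intros t ht.
    destruct (hHb t ltac:(lra)) as [h1 h2]. destruct (hgb t ltac:(lra)) as [h3 h4].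
    assert (0 <= (g t - g (1/2)) * (A - heinz_mean t a b)) by (apply Rmult_le_pos; lra).
    assert (0 <= (D - (g t - g (1/2))) * (A - L)) by (apply Rmult_le_pos; unfold D in *; lra).
    unfold D in *. nra. }
  fold D.
  assert (hX : I1 - L * I2 <= D * (A - G) / 2).
  { eapply Rle_trans. exact hle. assert (0 <= D * (L - G)) by (apply Rmult_le_pos; lra). lra. }
  assert (hX2 : 2 / D * (I1 - L * I2) <= 2 / D * (D * (A - G) / 2)).
  { apply Rmult_le_compat_l; auto. apply Rlt_le, Rdiv_lt_0_compat; lra. }
  replace (2 / D * (D * (A - G) / 2)) with (A - G) in hX2 by (field; lra).
  lra.
Qed.
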